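(* Let $A$ be a nonempty set of positive integers and let $n$ be a positive integer. Then (a) $\displaystyle\sum_{k=1}^{n}N^p_A(k)\,\omega(n-k)=\sum_{k=1}^{n}\tau_A(k)\big(q^e_{\mathbb N\setminus A}(n-k)-q^o_{\mathbb N\setminus A}(n-k)\big)$; (b) $\displaystyle\sum_{k=1}^{n}(-1)^{n-k}N^q_A(k)\,o(n-k)=\sum_{k=1}^{n}\tau^s_A(k)\big(p^e_{\mathbb N\setminus A}(n-k)-p^o_{\mathbb N\setminus A}(n-k)\big)$.
   Context: $\mathbb N$ is the set of positive integers. For a set $B$ of positive integers: $N^p_B(n)$ (resp. $N^q_B(n)$) is the total number of parts, summed over all partitions (resp. partitions into pairwise distinct parts) of $n$ with parts in $B$; $p^e_B(m)$, $p^o_B(m)$ count partitions of $m$ with parts in $B$ having an even, resp. odd, number of parts; $q^e_B(m)$, $q^o_B(m)$ are the analogous counts for partitions into distinct parts from $B$; $p^e_B(0)=q^e_B(0)=1$, $p^o_B(0)=q^o_B(0)=0$. $\tau_A(n)=\#\{a\in A:a\mid n\}$, $\tau^s_A(n)=\sum_{a\in A,\,a\mid n}(-1)^{n/a-1}$. $\omega(m)=1$ if $m=0$, $\omega(m)=(-1)^k$ if $m=\frac{3k^2\pm k}{2}$ for an integer $k\ge1$, and $0$ otherwise. $o(m)$ is the number of partitions of $m$ into distinct odd parts, $o(0)=1$. *)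

(* Defs.v *)
From mathcomp Require Import all_boot all_order all_algebra.
Set Implicit Arguments. Unset Strict Implicit. Unset Printing Implicit Defensive.
Import GRing.Theory Num.Theory.

(* A partition of n is encoded by its multiplicity function
   m : 'I_n -> 'I_n.+1, where m i is the multiplicity of the part i.+1
   (every part of a partition of n lies in 1..n and has multiplicity <= n). *)
Definition mults (n : nat) := {ffun 'I_n -> 'I_n.+1}.

Definition is_part (B : pred nat) (n : nat) (m : mults n) : bool :=
  ((\sum_(i < n) i.+1 * m i)%N == n) && [forall i, (0 < m i) ==> B i.+1].

Definition nparts (n : nat) (m : mults n) : nat := (\sum_(i < n) m i)%N.

Definition distinct_parts (n : nat) (m : mults n) : bool := [forall i, m i <= 1].

Definition Np (B : pred nat) (n : nat) : nat :=
  (\sum_(m : mults n | is_part B m) nparts m)%N.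
Definition Nq (B : pred nat) (n : nat) : nat :=
  (\sum_(m : mults n | is_part B m && distinct_parts m) nparts m)%N.

Definition pe (B : pred nat) (n : nat) : nat :=
  #|[set m : mults n | is_part B m && ~~ odd (nparts m)]|.
Definition po (B : pred nat) (n : nat) : nat :=
  #|[set m : mults n | is_part B m && odd (nparts m)]|.
Definition qe (B : pred nat) (n : nat) : nat :=
  #|[set m : mults n | [&& is_part B m, distinct_parts m & ~~ odd (nparts m)]]|.
Definition qo (B : pred nat) (n : nat) : nat :=
  #|[set m : mults n | [&& is_part B m, distinct_parts m & odd (nparts m)]]|.

Definition oddp (n : nat) : nat :=
  #|[set m : mults n | is_part odd m && distinct_parts m]|.

(* tau_A(n) = #{a in A : a | n}   (for n >= 1 every such a lies in 1..n) *)
Definition tau (A : pred nat) (n : nat) : nat :=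
  (\sum_(1 <= a < n.+1 | A a && (a %| n)) 1)%N.

Definition taus (A : pred nat) (n : nat) : int :=
  (\sum_(1 <= a < n.+1 | A a && (a %| n)%N) (-1) ^+ (n %/ a - 1))%R.

(* omega(m) = 1 if m = 0, (-1)^k if m = (3k^2 +- k)/2 for some k >= 1, else 0.
   The generalized pentagonal numbers (3k^2 +- k)/2, k >= 1, are pairwise
   distinct and >= k, so the sum below has at most one nonzero term. *)
Definition omega (m : nat) : int :=
  if m == 0%N then 1%R else
  (\sum_(1 <= k < m.+1 | (m == (3 * k ^ 2 - k) %/ 2)%N || (m == (3 * k ^ 2 + k) %/ 2)%N)
      (-1) ^+ k)%R.

(* Main.v *)
Require Import Defs.
From mathcomp Require Import all_boot all_order all_algebra.
From mathcomp Require Import zify ring.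
Import GRing.Theory Num.Theory.
Local Open Scope ring_scope.

Set Implicit Arguments. Unset Strict Implicit. Unset Printing Implicit Defensive.


Definition eqN (N : nat) (p q : {poly int}) := forall i, (i <= N)%N -> p`_i = q`_i.

Lemma eqN_refl N p : eqN N p p. Proof. by []. Qed.
Lemma eqN_sym N p q : eqN N p q -> eqN N q p. Proof. by move=> h i hi; rewrite h. Qed.
Lemma eqN_trans N p q r : eqN N p q -> eqN N q r -> eqN N p r.
Proof. by move=> h1 h2 i hi; rewrite h1 ?h2. Qed.
Lemma eqN_eq N p q : p = q -> eqN N p q. Proof. by move=> ->. Qed.

Lemma eqN_mul N p p' q q' : eqN N p p' -> eqN N q q' -> eqN N (p * q) (p' * q').
Proof.
move=> hp hq i hi; rewrite !coefM; apply: eq_bigr => j _.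
have hj : (j <= N)%N by have := ltn_ord j; lia.
by rewrite hp // hq //; lia.
Qed.

Lemma eqN_add N p p' q q' : eqN N p p' -> eqN N q q' -> eqN N (p + q) (p' + q').
Proof. by move=> hp hq i hi; rewrite !coefD hp ?hq. Qed.

Lemma eqN_opp N p p' : eqN N p p' -> eqN N (- p) (- p').
Proof. by move=> hp i hi; rewrite !coefN hp. Qed.

Lemma eqN_prod N (I : Type) (r : seq I) (P : pred I) (F G : I -> {poly int}) :
  (forall i, P i -> eqN N (F i) (G i)) ->
  eqN N (\prod_(i <- r | P i) F i) (\prod_(i <- r | P i) G i).
Proof.
move=> h; apply: (big_ind2 (eqN N)) => //.
by move=> ? ? ? ? ? ?; apply: eqN_mul.
Qed.

Lemma eqN_sum N (I : Type) (r : seq I) (P : pred I) (F G : I -> {poly int}) :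
  (forall i, P i -> eqN N (F i) (G i)) ->
  eqN N (\sum_(i <- r | P i) F i) (\sum_(i <- r | P i) G i).
Proof.
move=> h; apply: (big_ind2 (eqN N)) => //.
by move=> ? ? ? ? ? ?; apply: eqN_add.
Qed.

Lemma eqN_cancel N (U p q : {poly int}) : U`_0 = 1 -> eqN N (U * p) (U * q) -> eqN N p q.
Proof.
move=> hU h.
suff H : forall i, (i <= N)%N -> forall j, (j <= i)%N -> p`_j = q`_j.
  by move=> i hi; apply: (H i hi).
elim=> [|i IH] hi j hj.
  have := h 0%N isT; rewrite !coefM !big_ord1 hU !mul1r.
  by have -> : j = 0%N by lia.
case: (ltnP j i.+1) => hji; first by apply: IH => //; lia.
have -> : j = i.+1 by lia.
have := h i.+1 hi; rewrite !coefM big_ord_recl [X in _ = X]big_ord_recl hU !mul1r subn0.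
rewrite [X in _ + X = _ -> _](_ : _ = \sum_(k < i.+1) U`_(bump 0 k) * q`_(i.+1 - bump 0 k)).
  by move=> H; apply: (addIr _ H).
apply: eq_bigr => k _; rewrite lift0 /= IH //; lia.
Qed.

Fixpoint tri (k : nat) : nat := if k is k'.+1 then (tri k' + k'.+1)%N else 0%N.

Definition qp (a b : nat) : {poly int} := \prod_(a <= j < b) (1 - 'X^j).
Definition Tt (n k : nat) : {poly int} := ((-1) ^+ k) *: 'X^(n * k + tri k) * qp k.+1 n.+1.
Definition Uu (n k : nat) : {poly int} := ((-1) ^+ k) *: 'X^(n * k + tri k) * qp k n.+1.
Definition Sh (n : nat) := \sum_(0 <= k < n.+1) Tt n k.
Definition Pent (n : nat) : {poly int} :=
  1 + \sum_(1 <= k < n.+1) ((-1) ^+ k) *: ('X^(k * k + tri k) + 'X^(k.-1 * k + tri k)).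

Lemma Tt_step n k : (k <= n)%N -> Tt n.+1 k = Tt n k + (Uu n k.+1 - Uu n k).
Proof.
move=> hk; rewrite /Tt /Uu /qp.
rewrite (big_nat_recr n.+1 k.+1) /=; last lia.
rewrite (big_ltn (idx := 1) _ (m := k) (n := n.+1)) /=; last lia.
have -> : (n.+1 * k + tri k = (n * k + tri k) + k)%N by rewrite mulSn; lia.
have -> : (n * k.+1 + tri k.+1 = (n * k + tri k) + (n.+1 + k))%N by rewrite /= mulnS; lia.
rewrite !exprD -!mul_polyC (exprS (-1 : int) k) mulN1r polyCN.
move: ((-1) ^+ k)%:P ('X^(n * k)) ('X^(tri k)) ('X^k) ('X^(n.+1)) (\prod_(k.+1 <= i < n.+1) (1 - 'X^i)) => s a b c d Q.
ring.
Qed.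

Lemma Sh_Pent n : Sh n = Pent n.
Proof.
elim: n => [|n IH].
  by rewrite /Sh /Pent /Tt /qp !big_nat1 big_geq // big_geq // mulr1 expr0 scale1r addr0.
rewrite /Sh big_nat_recr //=.
rewrite (eq_big_nat _ _ (F2 := fun k => Tt n k + (Uu n k.+1 - Uu n k))); last first.
  by move=> k /andP [_ hk]; apply: Tt_step; lia.
rewrite big_split /= telescope_sumr // -/(Sh n) IH.
have -> : Uu n 0 = 0.
  by rewrite /Uu /qp big_nat_recl // expr0 subrr mul0r mulr0.
rewrite /Pent (big_nat_recr n.+1) //= /Uu /Tt /qp.
have E1 : forall a, \prod_(a <= j < a) (1 - 'X^j) = 1 :> {poly int} by move=> a; rewrite big_geq.
rewrite !E1 !mulr1 subr0 scalerDr /=.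
rewrite -!addrA; congr (_ + _); congr (_ + _); exact: addrC.
Qed.

Definition Eul N : {poly int} := \prod_(j < N) (1 - 'X^(j.+1)).

Lemma Eul_Sh N : eqN N (Eul N) (Sh N).
Proof.
move=> i hi; rewrite /Sh big_nat_recl // coefD.
rewrite [X in _ = _ + X]coef_sum big1_seq ?addr0; last first.
  move=> k _; rewrite /Tt -scalerAl coefZ coefXnM ifT ?mulr0 //.
  rewrite /= mulnS; lia.
rewrite /Tt expr0 scale1r muln0 /= expr0 mul1r /qp big_add1 /= big_mkord.
by [].
Qed.

Lemma tri2 k : (2 * tri k = k * k.+1)%N.
Proof. elim: k => [|k IH] //=; nia. Qed.

Lemma tri_ge k : (k <= tri k)%N.
Proof. elim: k => [|k IH] //=; lia. Qed.

Lemma coef_Pent N m : (m <= N)%N -> (Pent N)`_m = omega m.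
Proof.
move=> hm; rewrite /Pent /omega coefD coef1 coef_sum.
under eq_bigr do rewrite coefZ coefD !coefXn.
case: (posnP m) => [->|mpos].
  rewrite big1_seq ?addr0 // => k /andP [_]; rewrite mem_index_iota => hk.
  have := tri_ge k => htk.
  rewrite (_ : (0%N == k * k + tri k) = false); last by apply/negbTE; lia.
  rewrite (_ : (0%N == k.-1 * k + tri k) = false); last by apply/negbTE; lia.
  by rewrite addr0 mulr0.
rewrite add0r [in RHS]big_mkcond /=.
rewrite [in LHS](big_cat_nat (n := m.+1)) //=.
rewrite [X in _ + X = _]big1_seq ?addr0; last first.
  move=> k /andP [_]; rewrite mem_index_iota => hk.
  have := tri_ge k.
  rewrite (_ : (m == k * k + tri k) = false); last by apply/negbTE; rewrite neq_ltn; nia.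
  rewrite (_ : (m == k.-1 * k + tri k) = false); last by apply/negbTE; rewrite neq_ltn; nia.
  by rewrite addr0 mulr0.
apply: eq_big_nat => k /andP [hk1 hk2].
have t2 := tri2 k.
have -> : ((3 * k ^ 2 - k) %/ 2 = k.-1 * k + tri k)%N.
  have -> : (3 * k ^ 2 - k = 2 * (k.-1 * k + tri k))%N.
    case: k hk1 hk2 t2 => [|k] //= _ _ t2; rewrite expnS expn1; nia.
  by rewrite mulKn.
have -> : ((3 * k ^ 2 + k) %/ 2 = k * k + tri k)%N.
  have -> : (3 * k ^ 2 + k = 2 * (k * k + tri k))%N by rewrite expnS expn1; nia.
  by rewrite mulKn.
case: (m =P k * k + tri k) => [->|hA] /=.
  rewrite (_ : (k * k + tri k == k.-1 * k + tri k) = false) ?orbT ?addr0 ?mulr1 //.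
  apply/negbTE; case: k hk1 {hk2 t2} => [|k] //= _; rewrite neq_ltn; nia.
by case: (m =P k.-1 * k + tri k) => [_|_] /=; rewrite ?add0r ?addr0 ?mulr1 ?mulr0.
Qed.

Lemma coef_Eul N m : (m <= N)%N -> (Eul N)`_m = omega m.
Proof. by move=> hm; rewrite Eul_Sh // Sh_Pent coef_Pent. Qed.


Definition Fw (w : nat -> nat -> int) (n : nat) : {poly int} :=
  \prod_(j < n) \sum_(c < n.+1) w j.+1 c *: 'X^(j.+1 * c).

Lemma prod_scaleX (I : Type) (r : seq I) (a : I -> int) (e : I -> nat) :
  \prod_(i <- r) (a i *: 'X^(e i)) = (\prod_(i <- r) a i) *: 'X^(\sum_(i <- r) e i)%N.
Proof.
elim: r => [|x r IH]; first by rewrite !big_nil scale1r expr0.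
by rewrite !big_cons IH exprD -scalerAl -scalerAr scalerA.
Qed.

Lemma Fw_coef w n : (Fw w n)`_n =
  \sum_(m : mults n | (\sum_(i < n) i.+1 * m i)%N == n) \prod_(i < n) w i.+1 (m i).
Proof.
rewrite /Fw bigA_distr_bigA coef_sum [RHS]big_mkcond; apply: eq_bigr => m _.
rewrite prod_scaleX coefZ coefXn eq_sym.
by case: ifP; rewrite ?mulr1 ?mulr0.
Qed.

Lemma prod_if n (P : 'I_n -> bool) (g : 'I_n -> int) :
  \prod_(i < n) (if P i then g i else 0) = if [forall i, P i] then \prod_(i < n) g i else 0.
Proof.
case: ifP => [/forallP h|/negbT]; first by apply: eq_bigr => i _; rewrite h.
rewrite negb_forall => /existsP [i hi].
by rewrite (bigD1 i) //= (negbTE hi) mul0r.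
Qed.

Definition wG (B : pred nat) (d : bool) (s : int) (j c : nat) : int :=
  if (c == 0%N) || (B j && (~~ d || (c <= 1)%N)) then s ^+ c else 0.

Lemma prod_wG B d s n (mu : mults n) :
  \prod_(i < n) wG B d s i.+1 (mu i) =
  if [forall i, (0 < mu i)%N ==> B i.+1] && (~~ d || distinct_parts mu)
  then s ^+ (nparts mu) else 0.
Proof.
rewrite /wG prod_if /nparts.
rewrite -(big_morph (fun k : nat => s ^+ k) (exprD s) (expr0 s)).
congr (if _ then _ else _).
apply/forallP/andP.
  move=> h; split.
    apply/forallP => i; have := h i; case: (mu i) => [[|k] hk] //=.
    by case/andP.
  case: d h => //= h; apply/forallP => i; have := h i.
  by case: (mu i) => [[|[|k]] hk] //=; rewrite andbF.
move=> [/forallP h1 h2] i; case: (posnP (mu i)) => [->|hpos] //=.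
rewrite (implyP (h1 i) hpos) /=.
case: d h2 => //= /forallP h2; exact: h2.
Qed.

Lemma count_gen B d s n :
  \sum_(mu : mults n | is_part B mu && (~~ d || distinct_parts mu)) s ^+ (nparts mu) =
  (Fw (wG B d s) n)`_n.
Proof.
rewrite Fw_coef [RHS]big_mkcond [LHS]big_mkcond /= /is_part.
apply: eq_bigr => mu _; rewrite prod_wG.
by rewrite -andbA; case: (_ == n).
Qed.

Lemma card_sum (T : finType) (Q : pred T) :
  (#|[set x | Q x]|)%:Z = \sum_(x | Q x) 1.
Proof. by rewrite cardsE -sum1_card -natz natr_sum. Qed.

Lemma pe_po B n : (pe B n)%:Z - (po B n)%:Z = (Fw (wG B false (-1)) n)`_n.
Proof.
rewrite -count_gen /pe /po !card_sum.
rewrite [RHS](bigID (fun mu => odd (nparts mu))) /= addrC; congr (_ + _).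
  apply: eq_big => mu; first by rewrite /= andbT.
  by move=> /andP [_ h]; rewrite -signr_odd (negbTE h).
rewrite -sumrN; apply: eq_big => mu; first by rewrite /= andbT.
by move=> /andP [_ h]; rewrite -signr_odd h expr1.
Qed.

Lemma qe_qo B n : (qe B n)%:Z - (qo B n)%:Z = (Fw (wG B true (-1)) n)`_n.
Proof.
rewrite -count_gen /qe /qo !card_sum.
rewrite [RHS](bigID (fun mu => odd (nparts mu))) /= addrC; congr (_ + _).
  apply: eq_big => mu; first by rewrite /= andbA.
  by move=> /and3P [_ _ h]; rewrite -signr_odd (negbTE h).
rewrite -sumrN; apply: eq_big => mu; first by rewrite /= andbA.
by move=> /and3P [_ _ h]; rewrite -signr_odd h expr1.
Qed.

Lemma oddp_F n : (oddp n)%:Z = (Fw (wG odd true 1) n)`_n.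
Proof.
rewrite -count_gen /oddp card_sum; apply: eq_bigr => mu _; by rewrite expr1n.
Qed.

Definition wD (B : pred nat) (d : bool) (i j c : nat) : int :=
  if j == i.+1 then c%:R * wG B d 1 j c else wG B d 1 j c.

Lemma countD B d n (i : 'I_n) :
  \sum_(mu : mults n | is_part B mu && (~~ d || distinct_parts mu)) ((mu i)%:R : int) =
  (Fw (wD B d i) n)`_n.
Proof.
rewrite Fw_coef [RHS]big_mkcond [LHS]big_mkcond /= /is_part.
apply: eq_bigr => mu _.
have -> : \prod_(j < n) wD B d i j.+1 (mu j) = (mu i)%:R * \prod_(j < n) wG B d 1 j.+1 (mu j).
  rewrite (bigD1 i) //= [in RHS](bigD1 i) //= /wD eqxx -mulrA; congr (_ * (_ * _)).
  by apply: eq_bigr => j hj; rewrite eqSS (negbTE (hj : (j : nat) != i)).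
rewrite prod_wG expr1n.
rewrite -andbA; case: (_ == n) => //=.
by case: (_ && _); rewrite ?mulr1 ?mulr0.
Qed.

Lemma Np_F A n : (Np A n)%:Z = \sum_(i < n) (Fw (wD A false i) n)`_n.
Proof.
rewrite /Np -natz natr_sum.
rewrite (eq_bigr (fun mu : mults n => \sum_(i < n) ((mu i)%:R : int))); last first.
  by move=> mu _; rewrite /nparts natr_sum.
rewrite exchange_big; apply: eq_bigr => i _; rewrite -countD.
by apply: eq_bigl => mu; rewrite /= andbT.
Qed.

Lemma Nq_F A n : (Nq A n)%:Z = \sum_(i < n) (Fw (wD A true i) n)`_n.
Proof.
rewrite /Nq -natz natr_sum.
rewrite (eq_bigr (fun mu : mults n => \sum_(i < n) ((mu i)%:R : int))); last first.
  by move=> mu _; rewrite /nparts natr_sum.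
rewrite exchange_big; apply: eq_bigr => i _; rewrite -countD.
by [].
Qed.


Definition FacM (w : nat -> nat -> int) (M j : nat) : {poly int} :=
  \sum_(c < M) w j c *: 'X^(j * c).

Lemma FwE w n : Fw w n = \prod_(j < n) FacM w n.+1 j.+1.
Proof. by []. Qed.

Lemma coef_FacM w M j i : (0 < j)%N -> (i < M)%N ->
  (FacM w M j)`_i = \sum_(c < i.+1) w j c * (i == (j * c)%N)%:R.
Proof.
move=> hj hi; rewrite /FacM coef_sum.
under eq_bigr do rewrite coefZ coefXn.
rewrite [RHS](big_ord_widen M (fun c => w j c * (i == (j * c)%N)%:R)) // [RHS]big_mkcond /=.
apply: eq_bigr => c _; case: ifP => // hc.
rewrite (_ : (i == (j * c)%N) = false) ?mulr0 //.
apply/negbTE; rewrite neq_ltn; apply/orP; left; move/negbT: hc; rewrite -leqNgt.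
move=> hc; apply: (leq_trans hc); rewrite leq_pmull //.
Qed.

Lemma FacM_eqN w M M' j k : (0 < j)%N -> (k < M)%N -> (k < M')%N ->
  eqN k (FacM w M j) (FacM w M' j).
Proof.
move=> hj hM hM' i hi; rewrite !coef_FacM //; lia.
Qed.

Lemma FacM_const w M j k : (0 < j)%N -> (k < j)%N -> (k < M)%N ->
  eqN k (FacM w M j) (w j 0%N)%:P.
Proof.
move=> hj hkj hM i hi; rewrite coef_FacM //; last lia.
rewrite big_ord_recl /= muln0 coefC big1 ?addr0.
  by case: (i == 0%N); rewrite ?mulr1 ?mulr0.
move=> c _; rewrite (_ : (i == (j * bump 0 c)%N) = false) ?mulr0 //.
apply/negbTE; rewrite neq_ltn; apply/orP; left.
rewrite /bump /= add1n mulnS; lia.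
Qed.

Lemma eqN_prod0 N (I : eqType) (r : seq I) (i0 : I) (F : I -> {poly int}) :
  uniq r -> i0 \in r -> eqN N (F i0) 0 -> eqN N (\prod_(i <- r) F i) 0.
Proof.
move=> ur ir h.
rewrite (bigD1_seq i0) //=.
apply: (@eqN_trans _ _ (0 * \prod_(i <- r | i != i0) F i)); last by rewrite mul0r.
by apply: eqN_mul.
Qed.

Lemma Fw_trunc w k N : (k <= N)%N -> (forall j, (k < j)%N -> w j 0%N = 1) ->
  (Fw w k)`_k = (Fw w N)`_k.
Proof.
move=> hkN hw; symmetry; apply: (_ : eqN k (Fw w N) (Fw w k)) => //.
rewrite !FwE -!(big_mkord xpredT (fun j => FacM w _ j.+1)).
rewrite (big_cat_nat (n := k)) //=.
rewrite -[X in eqN _ _ X]mulr1; apply: eqN_mul.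
  apply: eqN_prod => j _; apply: FacM_eqN => //; lia.
apply: (@eqN_trans _ _ (\prod_(k <= i < N) 1)); last by rewrite big1.
rewrite big_seq_cond [X in eqN _ _ X]big_seq_cond.
apply: eqN_prod => j /andP [hj _]; move: hj; rewrite mem_index_iota => hj.
apply: (eqN_trans (FacM_const _ _ _ _)); try lia.
by rewrite hw //; lia.
Qed.


Definition G (s : int) (j N : nat) : {poly int} := \sum_(c < N.+1) (s ^+ c) *: 'X^(j * c).

Lemma geo_tele (a : int) j M :
  (1 - a *: 'X^j) * \sum_(c < M) (a ^+ c) *: 'X^(j * c) = 1 - (a ^+ M) *: 'X^(j * M).
Proof.
elim: M => [|M IH]; first by rewrite big_ord0 mulr0 expr0 muln0 expr0 scale1r subrr.
rewrite big_ord_recr /= mulrDr IH mulnS exprD -!mul_polyC exprS polyCM.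
move: (a%:P) (a ^+ M)%:P ('X^j) ('X^(j * M)) => x y u v; ring.
Qed.

Lemma X_big N e : (N < e)%N -> eqN N ('X^e) 0.
Proof. move=> h i hi; rewrite coefXn coef0 (_ : (i == e) = false) //; apply/negbTE; lia. Qed.

Lemma coefX_big i e : (i < e)%N -> ('X^e : {poly int})`_i = 0.
Proof. by move=> h; rewrite coefXn (_ : (i == e) = false) //; apply/negbTE; lia. Qed.

Lemma G_inv s j N : (0 < j)%N -> eqN N ((1 - s *: 'X^j) * G s j N) 1.
Proof.
move=> hj; rewrite /G geo_tele.
apply: (@eqN_trans _ _ (1 - (s ^+ N.+1) *: 0)); last by rewrite scaler0 subr0.
apply: eqN_add => //; apply: eqN_opp => i hi; rewrite !coefZ coefX_big ?coef0 ?mulr0 //; nia.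
Qed.

Lemma S_tele j M :
  (1 - 'X^j) * \sum_(c < M.+1) (c%:R : int) *: 'X^(j * c) =
  \sum_(c < M) 'X^(j * c.+1) - (M%:R : int) *: 'X^(j * M.+1).
Proof.
elim: M => [|M IH].
  by rewrite big_ord1 big_ord0 !scale0r mulr0 subr0.
rewrite big_ord_recr /= mulrDr IH big_ord_recr /=.
rewrite (mulnS j M.+1) exprD -!mul_polyC mulrS polyCD.
move: (\sum_(i < M) 'X^(j * i.+1)) (M%:R : int)%:P ('X^j) ('X^(j * M.+1)) => x y u v; ring.
Qed.

Lemma U0 j : (0 < j)%N -> (1 - 'X^j : {poly int})`_0 = 1.
Proof. by case: j => // j _; rewrite coefB coef1 coefXn subr0. Qed.

Lemma S_eq j N : (0 < j)%N ->
  eqN N (\sum_(c < N.+1) (c%:R : int) *: 'X^(j * c)) (G 1 j N * ('X^j * G 1 j N)).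
Proof.
move=> hj; apply: (eqN_cancel (U0 hj)).
rewrite S_tele (mulrA (1 - 'X^j)).
have h1 : eqN N ((1 - 'X^j) * G 1 j N) 1 by rewrite -[X in 1 - X]scale1r; apply: G_inv.
apply: (@eqN_trans _ _ (1 * ('X^j * G 1 j N))); last by apply: eqN_mul => //; apply: eqN_sym.
rewrite mul1r /G mulr_sumr big_ord_recr /=.
apply: eqN_add.
  by apply: eqN_eq; apply: eq_bigr => c _; rewrite expr1n scale1r -exprD mulnS.
move=> i hi; rewrite coefN coefZ expr1n scale1r -exprD coefX_big; last nia.
by rewrite coefX_big ?mulr0 ?oppr0 //; nia.
Qed.


Lemma Fac_wG0 B s N j : FacM (wG B false s) N.+1 j = if B j then G s j N else 1.
Proof.
rewrite /FacM /wG /G; case: (B j) => /=.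
  by apply: eq_bigr => c _; rewrite orbT.
rewrite big_ord_recl big1 ?addr0 /=; first by rewrite muln0 expr0 expr0 scale1r.
by move=> c _; rewrite scale0r.
Qed.

Lemma Fac_wG1 B s N j : FacM (wG B true s) N.+2 j = if B j then 1 + s *: 'X^j else 1.
Proof.
rewrite /FacM /wG big_ord_recl big_ord_recl big1 ?addr0 /=.
  rewrite muln0 muln1 !expr0 expr1 scale1r.
  by case: (B j); rewrite ?scale0r ?addr0.
by move=> c _; rewrite andbF scale0r.
Qed.

Lemma Fac_wD0 B i N j : FacM (wD B false i) N.+1 j =
  if j == i.+1 then (if B j then \sum_(c < N.+1) (c%:R : int) *: 'X^(j * c) else 0)
  else (if B j then G 1 j N else 1).
Proof.
rewrite -Fac_wG0 /FacM /wD; case: (j == i.+1) => //.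
rewrite /wG; case: (B j) => /=.
  by apply: eq_bigr => c _; rewrite orbT expr1n mulr1.
by apply: big1 => c _; have [->|hc] := eqVneq (c : nat) 0%N; [rewrite mul0r scale0r | rewrite /= ?(negbTE hc) mulr0 scale0r].
Qed.

Lemma Fac_wD1 B i N j : FacM (wD B true i) N.+2 j =
  if j == i.+1 then (if B j then 'X^j else 0)
  else (if B j then 1 + 'X^j else 1).
Proof.
rewrite /FacM /wD; case: (j == i.+1).
  rewrite /wG big_ord_recl big_ord_recl big1 ?addr0 /=.
    rewrite mul0r scale0r add0r muln1 mul1r.
    by case: (B j); rewrite /= ?expr1 ?scale1r ?scale0r.
  by move=> c _; rewrite andbF mulr0 scale0r.
have := Fac_wG1 B 1 N j; rewrite /FacM => ->.
by rewrite scale1r.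
Qed.

Definition wOm (j c : nat) : int := (-1) ^+ (j * c)%N * wG odd true 1 j c.

Lemma Fac_wOm N j : FacM wOm N.+2 j = if odd j then 1 - 'X^j else 1.
Proof.
rewrite /FacM /wOm /wG big_ord_recl big_ord_recl big1 ?addr0 /=.
  rewrite (_ : bump 0 0 = 1%N) // muln0 muln1 !expr0 expr1n !mulr1 scale1r.
  case: (boolP (odd j)) => hj /=; last by rewrite mulr0 scale0r addr0.
  by rewrite mulr1 -signr_odd hj expr1 scaleN1r.
by move=> c _; rewrite /bump /= !add1n /= andbF mulr0 scale0r.
Qed.

Lemma Fw_sign w n :
  (Fw (fun j c => (-1) ^+ (j * c)%N * w j c) n)`_n = (-1) ^+ n * (Fw w n)`_n.
Proof.
rewrite !Fw_coef mulr_sumr; apply: eq_bigr => mu /eqP hmu.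
rewrite big_split /=; congr (_ * _).
by rewrite -(big_morph (fun k : nat => (-1) ^+ k) (exprD (-1)) (expr0 (-1))) hmu.
Qed.


Definition PB (B : pred nat) (s : int) N : {poly int} :=
  \prod_(j < N) (if B j.+1 then G s j.+1 N else 1).
Definition QB (B : pred nat) (s : int) N : {poly int} :=
  \prod_(j < N) (if B j.+1 then 1 + s *: 'X^(j.+1) else 1).
Definition OM N : {poly int} := \prod_(j < N) (if odd j.+1 then 1 - 'X^(j.+1) else 1).
Definition TA (B : pred nat) (s : int) N : {poly int} :=
  \sum_(i < N) (if B i.+1 then 'X^(i.+1) * G s i.+1 N else 0).

Lemma Fw_PB B s N : Fw (wG B false s) N = PB B s N.
Proof. by rewrite FwE; apply: eq_bigr => j _; rewrite Fac_wG0. Qed.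

Lemma Fw_QB B s N : Fw (wG B true s) N.+1 = QB B s N.+1.
Proof. by rewrite FwE; apply: eq_bigr => j _; rewrite Fac_wG1. Qed.

Lemma Fw_OM N : Fw wOm N.+1 = OM N.+1.
Proof. by rewrite FwE; apply: eq_bigr => j _; rewrite Fac_wOm. Qed.

Lemma NP_eq A N :
  eqN N (\sum_(i < N) Fw (wD A false i) N) (PB A 1 N * TA A 1 N).
Proof.
rewrite /TA mulr_sumr; apply: eqN_sum => i _.
rewrite FwE (eq_bigr _ (fun (j : 'I_N) _ => Fac_wD0 A i N j.+1)) /PB.
rewrite (bigD1 i) //= eqxx [X in eqN _ _ (X * _)](bigD1 i) //=.
rewrite (eq_bigr (fun j : 'I_N => if A j.+1 then G 1 j.+1 N else 1)); last first.
  by move=> j hj; rewrite eqSS (negbTE (hj : (j : nat) != i)).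
set R := \prod_(j < N | j != i) _.
case: (A i.+1); last by rewrite mul0r mulr0.
apply: (@eqN_trans _ _ ((G 1 i.+1 N * ('X^(i.+1) * G 1 i.+1 N)) * R)).
  by apply: eqN_mul => //; apply: S_eq.
by apply: eqN_eq; ring.
Qed.

Lemma NQ_eq A N :
  eqN N.+1 (\sum_(i < N.+1) Fw (wD A true i) N.+1) (QB A 1 N.+1 * TA A (-1) N.+1).
Proof.
rewrite /TA mulr_sumr; apply: eqN_sum => i _.
rewrite FwE (eq_bigr _ (fun (j : 'I_N.+1) _ => Fac_wD1 A i N j.+1)) /QB.
rewrite (bigD1 i) //= eqxx [X in eqN _ _ (X * _)](bigD1 i) //=.
rewrite (eq_bigr (fun j : 'I_N.+1 => if A j.+1 then 1 + 1 *: 'X^(j.+1) else 1)); last first.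
  by move=> j hj; rewrite eqSS (negbTE (hj : (j : nat) != i)) scale1r.
set R := \prod_(j < N.+1 | j != i) _.
case: (A i.+1); last by rewrite mul0r mulr0.
have h := @G_inv (-1) i.+1 N.+1 (ltn0Sn i).
rewrite scaleN1r opprK in h.
apply: (@eqN_trans _ _ (((1 + 'X^(i.+1)) * G (-1) i.+1 N.+1) * 'X^(i.+1) * R)).
  apply: eqN_mul => //; rewrite -[X in eqN _ X]mul1r; apply: eqN_mul => //.
  exact: eqN_sym.
by apply: eqN_eq; rewrite scale1r; ring.
Qed.

Lemma PBE A N : eqN N (PB A 1 N * Eul N) (QB (predC A) (-1) N).
Proof.
rewrite /PB /Eul /QB -big_split /=; apply: eqN_prod => j _ /=.
case: (A j.+1) => /=; last by rewrite mul1r scaleN1r.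
rewrite mulrC -[X in 1 - X]scale1r; exact: G_inv.
Qed.

Lemma coef0_prod (I : Type) (r : seq I) (P : pred I) (F : I -> {poly int}) :
  (\prod_(i <- r | P i) F i)`_0 = \prod_(i <- r | P i) (F i)`_0.
Proof.
by apply: (big_morph (fun p : {poly int} => p`_0) (@coef0M _) (coef1 _ 0)).
Qed.

Definition Ev N : {poly int} := \prod_(j < N) (if odd j.+1 then 1 else 1 - 'X^(j.+1)).
Definition hh M : {poly int} := \prod_(j < M) (1 - 'X^((j.+1).*2)).

Lemma Ev_hh M : Ev M.*2 = hh M /\ Ev M.*2.+1 = hh M.
Proof.
elim: M => [|M [IH1 IH2]]; first by rewrite /Ev /hh !big_ord0 big_ord1.
have E2 : Ev (M.+1).*2 = hh M.+1.
  rewrite doubleS /Ev big_ord_recr /= -/(Ev M.*2.+1) IH2 /hh big_ord_recr /=.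
  by rewrite odd_double /= doubleS.
split => //; rewrite /Ev big_ord_recr /= -/(Ev (M.+1).*2) E2.
by rewrite odd_double mulr1.
Qed.

Lemma Ev_eq N : eqN N (hh N) (Ev N).
Proof.
have -> : Ev N = hh N./2.
  rewrite -{1}(odd_double_half N); case: (odd N) => /=; by case: (Ev_hh N./2).
rewrite /hh -!(big_mkord xpredT (fun j => 1 - 'X^((j.+1).*2))).
have hN : (N./2 <= N)%N by rewrite -{2}(odd_double_half N) -addnn; lia.
rewrite (big_cat_nat (n := N./2)) //= -[X in eqN _ _ X]mulr1; apply: eqN_mul => //.
apply: (@eqN_trans _ _ (\prod_(N./2 <= i < N) 1)); last by rewrite big1.
rewrite big_seq [X in eqN _ _ X]big_seq; apply: eqN_prod => j; rewrite mem_index_iota => hj.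
move=> i hi; rewrite coefB coef1 coefX_big ?subr0 //.
have := odd_double_half N; rewrite -!addnn; lia.
Qed.

Definition Dist N : {poly int} := \prod_(j < N) (1 + 'X^(j.+1)).

Lemma Euler_odd N : eqN N (Dist N * OM N) 1.
Proof.
have E0 : (Eul N)`_0 = 1 by rewrite coef_Eul.
apply: (eqN_cancel E0).
have hE : Eul N = OM N * Ev N.
  rewrite /Eul /OM /Ev -big_split /=; apply: eq_bigr => j _.
  by case: (odd j); rewrite ?mulr1 ?mul1r.
have hD : Eul N * Dist N = hh N.
  rewrite /Eul /Dist /hh -big_split /=; apply: eq_bigr => j _.
  rewrite -addnn exprD; move: ('X^(j.+1)) => x; ring.
rewrite mulrA hD mulr1.
apply: (@eqN_trans _ _ (Ev N * OM N)); first by apply: eqN_mul => //; exact: Ev_eq.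
by rewrite hE mulrC.
Qed.


Lemma coef_G s a N m : (0 < a)%N -> (m <= N)%N ->
  (G s a N)`_m = if (a %| m)%N then s ^+ (m %/ a) else 0.
Proof.
move=> ha hm.
have -> : G s a N = FacM (fun _ c => s ^+ c) N.+1 a by [].
rewrite coef_FacM // ?ltnS //.
case: ifP => hd.
  have hq : (m %/ a < m.+1)%N by rewrite ltnS leq_div.
  rewrite (bigD1 (Ordinal hq)) //= (_ : (m == a * (m %/ a))%N = true); last first.
    by apply/eqP; rewrite mulnC divnK.
  rewrite mulr1 big1 ?addr0 // => c hc.
  rewrite (_ : (m == a * c)%N = false) ?mulr0 //.
  apply/negbTE/eqP => hmc; move/eqP: hc; apply; apply: val_inj => /=.
  by rewrite -(mulKn c ha) -hmc.
rewrite big1 // => c _; rewrite (_ : (m == a * c)%N = false) ?mulr0 //.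
apply/negbTE/eqP => hmc; move/negbT: hd; rewrite hmc dvdn_mulr // dvdnn.
Qed.

Lemma coef_TA B s N k : (0 < k)%N -> (k <= N)%N ->
  (TA B s N)`_k = \sum_(1 <= a < k.+1 | B a && (a %| k)%N) s ^+ (k %/ a - 1).
Proof.
move=> hk hkN; rewrite /TA coef_sum.
rewrite big_add1 /= big_mkord [RHS]big_mkcond /=.
rewrite [RHS](big_ord_widen N (fun i => if B i.+1 && (i.+1 %| k)%N then s ^+ (k %/ i.+1 - 1) else 0) hkN) [RHS]big_mkcond /=.
apply: eq_bigr => i _.
case: (B i.+1) => /=; last by rewrite coef0 if_same.
rewrite coefXnM.
case: ltnP => hik //=.
rewrite coef_G //; last lia.
by rewrite dvdn_subl // divnBr // divnn /=.
Qed.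

Lemma TA0 B s N : (TA B s N)`_0 = 0.
Proof.
rewrite /TA coef_sum big1 // => i _; case: (B i.+1); first by rewrite coefXnM.
by rewrite coef0.
Qed.

Lemma conv_coef (P Q : {poly int}) n : P`_0 = 0 ->
  \sum_(1 <= k < n.+1) P`_k * Q`_(n - k) = (P * Q)`_n.
Proof.
move=> h0; rewrite coefM -(big_mkord xpredT (fun j => P`_j * Q`_(n - j))).
by rewrite big_ltn // h0 mul0r add0r.
Qed.

Lemma Fw_wD_zero B d i k N : (k <= i)%N -> (i < N)%N -> (Fw (wD B d i) N)`_k = 0.
Proof.
move=> hki hiN; rewrite FwE.
suff H : eqN k (\prod_(j < N) FacM (wD B d i) N.+1 j.+1) 0 by rewrite H // coef0.
apply: (@eqN_prod0 k _ _ (Ordinal hiN)) => //; first exact: index_enum_uniq.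
  by rewrite mem_index_enum.
apply: (eqN_trans (FacM_const _ _ _ _)); rewrite /=; try lia.
by rewrite /wD eqxx mul0r.
Qed.

Lemma wD_one B d (i k j : nat) : (i < k)%N -> (k < j)%N -> wD B d i j 0%N = 1.
Proof.
move=> hik hkj; rewrite /wD (_ : (j == i.+1) = false); last by apply/negbTE; lia.
by rewrite /wG eqxx.
Qed.

Lemma Np_coef A N k : (k <= N)%N -> (Np A k)%:Z = (PB A 1 N * TA A 1 N)`_k.
Proof.
move=> hkN; rewrite Np_F.
rewrite (eq_bigr (fun i : 'I_k => (Fw (wD A false i) N)`_k)); last first.
  move=> i _; apply: Fw_trunc => // j hj; exact: (wD_one _ _ (ltn_ord i) hj).
rewrite (big_ord_widen N (fun i => (Fw (wD A false i) N)`_k)) // big_mkcond /=.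
rewrite (eq_bigr (fun i : 'I_N => (Fw (wD A false i) N)`_k)); last first.
  move=> i _; case: ifP => // /negbT; rewrite -leqNgt => hki.
  by rewrite Fw_wD_zero.
by rewrite -coef_sum NP_eq.
Qed.

Lemma Nq_coef A N k : (k <= N.+1)%N -> (Nq A k)%:Z = (QB A 1 N.+1 * TA A (-1) N.+1)`_k.
Proof.
move=> hkN; rewrite Nq_F.
rewrite (eq_bigr (fun i : 'I_k => (Fw (wD A true i) N.+1)`_k)); last first.
  move=> i _; apply: Fw_trunc => // j hj; exact: (wD_one _ _ (ltn_ord i) hj).
rewrite (big_ord_widen N.+1 (fun i => (Fw (wD A true i) N.+1)`_k)) // big_mkcond /=.
rewrite (eq_bigr (fun i : 'I_N.+1 => (Fw (wD A true i) N.+1)`_k)); last first.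
  move=> i _; case: ifP => // /negbT; rewrite -leqNgt => hki.
  by rewrite Fw_wD_zero.
by rewrite -coef_sum NQ_eq.
Qed.

Lemma oddp_coef N m : (m <= N.+1)%N -> (-1) ^+ m * (oddp m)%:Z = (OM N.+1)`_m.
Proof.
move=> hm; rewrite oddp_F -Fw_sign -/wOm -Fw_OM.
apply: Fw_trunc => // j _.
by rewrite /wOm /wG muln0 expr0 mul1r.
Qed.

Lemma pepo_coef B N m : (m <= N)%N -> (pe B m)%:Z - (po B m)%:Z = (PB B (-1) N)`_m.
Proof.
by move=> hm; rewrite pe_po -Fw_PB; apply: Fw_trunc.
Qed.

Lemma qeqo_coef B N m : (m <= N.+1)%N -> (qe B m)%:Z - (qo B m)%:Z = (QB B (-1) N.+1)`_m.
Proof.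
by move=> hm; rewrite qe_qo -Fw_QB; apply: Fw_trunc.
Qed.


Lemma QB_OM A N : eqN N (QB A 1 N * OM N) (PB (predC A) (-1) N).
Proof.
pose V : {poly int} := \prod_(j < N) (if A j.+1 then 1 else 1 + 'X^(j.+1)).
have V0 : V`_0 = 1.
  rewrite /V coef0_prod big1 // => j _; case: (A j.+1); first by rewrite coef1.
  by rewrite coefD coef1 coefXn.
apply: (eqN_cancel V0).
apply: (@eqN_trans _ _ 1).
  have -> : V * (QB A 1 N * OM N) = Dist N * OM N.
    rewrite mulrA; congr (_ * _); rewrite /V /QB /Dist -big_split /=.
    by apply: eq_bigr => j _; case: (A j.+1); rewrite ?scale1r ?mul1r ?mulr1.
  exact: Euler_odd.
apply: eqN_sym; rewrite /V /PB -big_split /=.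
apply: (@eqN_trans _ _ (\prod_(j < N) 1)); last by rewrite big1.
apply: eqN_prod => j _ /=; case: (A j.+1) => /=; first by rewrite mul1r.
have h := @G_inv (-1) j.+1 N (ltn0Sn j).
by rewrite scaleN1r opprK in h.
Qed.

Unset Implicit Arguments. Set Strict Implicit.

Theorem theorem3 (A : pred nat) (hA0 : exists a, A a) (hApos : forall a, A a -> (0 < a)%N)
  (n : nat) (hn : (0 < n)%N) :
  (\sum_(1 <= k < n.+1) (Np A k)%:Z * omega (n - k)
     = \sum_(1 <= k < n.+1) (tau A k)%:Z *
         ((qe (predC A) (n - k))%:Z - (qo (predC A) (n - k))%:Z))
  /\
  (\sum_(1 <= k < n.+1) (-1) ^+ (n - k) * (Nq A k)%:Z * (oddp (n - k))%:Z
     = \sum_(1 <= k < n.+1) taus A k *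
         ((pe (predC A) (n - k))%:Z - (po (predC A) (n - k))%:Z)).
Proof.
case: n hn => // n _; split.
  transitivity (\sum_(1 <= k < n.+2)
      (PB A 1 n.+1 * TA A 1 n.+1)`_k * (Eul n.+1)`_(n.+1 - k)).
    apply: eq_big_nat => k /andP [hk1 hk2]; rewrite (@Np_coef A n.+1 k) ?coef_Eul //; lia.
  transitivity (\sum_(1 <= k < n.+2)
      (TA A 1 n.+1)`_k * (QB (predC A) (-1) n.+1)`_(n.+1 - k)); last first.
    apply: eq_big_nat => k /andP [hk1 hk2]; rewrite (@qeqo_coef _ n); last lia.
    rewrite coef_TA //.
    congr (_ * _); rewrite /tau -natz natr_sum; apply: eq_bigr => a _.
    by rewrite expr1n.
  rewrite !conv_coef ?TA0 //; last by rewrite coef0M TA0 mulr0.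
  have -> : PB A 1 n.+1 * TA A 1 n.+1 * Eul n.+1 = TA A 1 n.+1 * (PB A 1 n.+1 * Eul n.+1).
    by rewrite mulrAC mulrC.
  have H := eqN_mul (@eqN_refl n.+1 (TA A 1 n.+1)) (@PBE A n.+1).
  exact: H (leqnn _).
transitivity (\sum_(1 <= k < n.+2)
    (QB A 1 n.+1 * TA A (-1) n.+1)`_k * (OM n.+1)`_(n.+1 - k)).
  apply: eq_big_nat => k /andP [hk1 hk2].
  rewrite [_ * (Nq A k)%:Z]mulrC -mulrA (@Nq_coef A n k) ?(@oddp_coef n) //; lia.
transitivity (\sum_(1 <= k < n.+2)
    (TA A (-1) n.+1)`_k * (PB (predC A) (-1) n.+1)`_(n.+1 - k)); last first.
  apply: eq_big_nat => k /andP [hk1 hk2]; rewrite (@pepo_coef _ n.+1); last lia.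
  by rewrite coef_TA //; lia.
rewrite !conv_coef ?TA0 //; last by rewrite coef0M TA0 mulr0.
have -> : QB A 1 n.+1 * TA A (-1) n.+1 * OM n.+1 = TA A (-1) n.+1 * (QB A 1 n.+1 * OM n.+1).
  by rewrite mulrAC mulrC.
have H := eqN_mul (@eqN_refl n.+1 (TA A (-1) n.+1)) (@QB_OM A n.+1).
exact: H (leqnn _).
Qed.
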